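(* For all non-negative integers $k$ and $n$, every weak embedding of $L_2(k)$ into $L_2(n)$ is a strong embedding.
   Context: $B_m$ denotes the Boolean lattice of all subsets of $\{1,\dots,m\}$ ordered by inclusion. $L_2(m)$ denotes the subposet of $B_m$ induced by the union of levels $\lfloor (m-1)/2\rfloor$ and $\lfloor (m+1)/2\rfloor$ (the $j$-th level being the $j$-element subsets). An injective map $f$ from a poset $P$ to a poset $Q$ is a weak embedding if $p\le q$ implies $f(p)\le f(q)$, and a strong embedding if $p\le q\iff f(p)\le f(q)$. *)

(* Defs.v *)
From mathcomp Require Import all_boot.
Set Implicit Arguments. Unset Strict Implicit. Unset Printing Implicit Defensive.

(* For m = 0 the lower level index is floor(-1/2) = -1 (empty level); with
   truncated nat arithmetic (m.-1)./2 = 0, which gives the same union. *)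
Definition L2_low (m : nat) : nat := (m.-1)./2.
Definition L2_high (m : nat) : nat := (m.+1)./2.

Definition in_L2 (m : nat) (A : {set 'I_m}) : bool :=
  (#|A| == L2_low m) || (#|A| == L2_high m).

Definition L2 (m : nat) := {A : {set 'I_m} | in_L2 A}.

Definition L2_le (m : nat) (p q : L2 m) : bool := val p \subset val q.

Definition weak_embedding (k n : nat) (f : L2 k -> L2 n) : Prop :=
  injective f /\ forall p q : L2 k, L2_le p q -> L2_le (f p) (f q).

Definition strong_embedding (k n : nat) (f : L2 k -> L2 n) : Prop :=
  injective f /\ forall p q : L2 k, L2_le p q <-> L2_le (f p) (f q).

(* Main.v *)
Require Import Defs.
From mathcomp Require Import all_boot zify.
Set Implicit Arguments. Unset Strict Implicit. Unset Printing Implicit Defensive.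

Lemma half_lt (k' : nat) : k'./2 < k'.+1.
Proof. have : k'./2 <= k' by rewrite leq_half_double; lia. lia. Qed.

Lemma pick1 (T : finType) (x : T) : [pick z in [set x]] = Some x.
Proof. case: pickP => [w|H]; rewrite ?in_set1; [by move/eqP->|by have := H x; rewrite in_set1 eqxx]. Qed.

Lemma Lh m : L2_high m = (L2_low m).+1 \/ (L2_low m = 0 /\ L2_high m = 0).
Proof. by case: m => [|m]; [right|left]. Qed.

Lemma eq_card (T : finType) (A B : {set T}) : A \subset B -> #|B| <= #|A| -> A = B.
Proof. by move=> h1 h2; apply/eqP; rewrite eqEcard h1 h2. Qed.

Lemma card_del (T : finType) (A : {set T}) x c : x \in A -> #|A| = c.+1 -> #|A :\ x| = c.
Proof. by move=> hx; rewrite (cardsD1 x) hx add1n => -[]. Qed.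

Definition sd (T : finType) (X Y : {set T}) : option T := [pick z in X :\: Y].

Lemma sd_spec (T : finType) (X Y : {set T}) : Y \subset X -> #|X| = #|Y|.+1 ->
  exists z, [/\ sd X Y = Some z, z \notin Y & X = z |: Y].
Proof.
move=> hYX hc.
have : #|X :\: Y| == 1 by rewrite cardsD (setIidPr hYX) hc; apply/eqP; lia.
case/cards1P => z hz.
have zXY : z \in X :\: Y by rewrite hz set11.
move: (zXY); rewrite inE => /andP [zY zX].
exists z; split => //; first by rewrite /sd hz pick1.
apply/esym/eq_card; last by rewrite cardsU1 zY hc.
by rewrite subUset sub1set zX hYX.
Qed.

Lemma inter_card (T : finType) (A B C : {set T}) j :
  A \subset C -> B \subset C -> #|A| = j -> #|B| = j -> #|C| = j.+1 -> A != B ->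
  #|A :&: B| + 1 = j.
Proof.
move=> hA hB cA cB cC ne.
have h1 : #|A :|: B| <= j.+1 by rewrite -cC; apply: subset_leq_card; rewrite subUset hA hB.
have h2 : j < #|A :|: B|.
  rewrite ltnNge; apply/negP => hle.
  have e : A = A :|: B by apply: eq_card; [exact: subsetUl | lia].
  have hBA : B \subset A by rewrite e subsetUr.
  have : B = A by apply: eq_card => //; lia.
  by move=> E; move: ne; rewrite E eqxx.
have := cardsUI A B; lia.
Qed.

Section Main.
Context (k' n : nat) (f : L2 k'.+1 -> L2 n) (finj : injective f)
  (fmono : forall p q, L2_le p q -> L2_le (f p) (f q)).
Local Notation k := k'.+1.
Local Notation l := (k'./2).
Local Notation m := (L2_low n).

Definition F (A : {set 'I_k}) : {set 'I_n} :=
  if (insub A : option (L2 k)) is Some p then val (f p) else set0.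

Lemma FS (A : {set 'I_k}) (hA : in_L2 A) : F A = val (f (exist _ A hA)).
Proof. by rewrite /F insubT. Qed.

Lemma FE (p : L2 k) : F (val p) = val (f p).
Proof. by case: p => A hA; rewrite FS. Qed.

Lemma Fmono (A B : {set 'I_k}) : in_L2 A -> in_L2 B -> A \subset B -> F A \subset F B.
Proof. move=> hA hB hAB; rewrite (FS hA) (FS hB); exact: (fmono (p:=exist _ A hA) (q:=exist _ B hB)). Qed.

Lemma Finj (A B : {set 'I_k}) : in_L2 A -> in_L2 B -> F A = F B -> A = B.
Proof. move=> hA hB; rewrite (FS hA) (FS hB) => /val_inj /finj. by move/(congr1 val). Qed.

Lemma FL2 (A : {set 'I_k}) : in_L2 A -> in_L2 (F A).
Proof. move=> hA; rewrite (FS hA); exact: valP. Qed.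

Lemma lo_in (A : {set 'I_k}) : #|A| = l -> in_L2 A.
Proof. by move=> h; rewrite /in_L2 /L2_low /= h eqxx. Qed.

Lemma up_in (A : {set 'I_k}) : #|A| = l.+1 -> in_L2 A.
Proof. by move=> h; rewrite /in_L2 /L2_high /= h eqxx orbT. Qed.

Lemma lo_out (A : {set 'I_k}) : #|A| = l -> exists y, y \notin A.
Proof.
move=> h; case: (pickP (fun y => y \notin A)) => [y hy|H]; first by exists y.
have : A = setT by apply/setP => y; rewrite inE; have := H y; case: (y \in A).
move=> E; move: h; rewrite E cardsT card_ord; have := half_lt k'; lia.
Qed.

Lemma FlowS (A : {set 'I_k}) : #|A| = l -> #|F A| = m /\ L2_high n = m.+1.
Proof.
move=> hA; have [y hy] := lo_out hA.
have hU : #|y |: A| = l.+1 by rewrite cardsU1 hy hA.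
have hsub : F A \subset F (y |: A) := Fmono (lo_in hA) (up_in hU) (subsetUr _ _).
have hne : F A != F (y |: A).
  apply/eqP => /(Finj (lo_in hA) (up_in hU)) E; move: hy; by rewrite E setU11.
have hlt : #|F A| < #|F (y |: A)| by apply: proper_card; rewrite properEneq hne hsub.
have := FL2 (lo_in hA); have := FL2 (up_in hU); rewrite /in_L2.
case/orP => /eqP h1; case/orP => /eqP h2; have [hm|[h3 h4]] := Lh n; lia.
Qed.

Lemma FupS (U : {set 'I_k}) : #|U| = l.+1 -> #|F U| = m.+1.
Proof.
move=> hU; have : 0 < #|U| by rewrite hU.
case/card_gt0P => x hx.
have hL : #|U :\ x| = l by move: hU; rewrite (cardsD1 x) hx; lia.
have [c hm] := FlowS hL.
have hsub : F (U :\ x) \subset F U := Fmono (lo_in hL) (up_in hU) (subD1set _ _).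
have hne : F (U :\ x) != F U.
  apply/eqP => /(Finj (lo_in hL) (up_in hU)) E; move: hx; by rewrite -E setD11.
have hlt : #|F (U :\ x)| < #|F U| by apply: proper_card; rewrite properEneq hne hsub.
have := FL2 (up_in hU); rewrite /in_L2; case/orP => /eqP h1; lia.
Qed.

Definition g (U : {set 'I_k}) x := sd (F U) (F (U :\ x)).
Definition h (L : {set 'I_k}) y := sd (F (y |: L)) (F L).
Definition phi (L U : {set 'I_k}) x := if x \in L then g U x else h L x.

Lemma g_spec (U : {set 'I_k}) x : #|U| = l.+1 -> x \in U ->
  exists z, [/\ g U x = Some z, z \notin F (U :\ x) & F U = z |: F (U :\ x)].
Proof.
move=> hU hx.
have hL : #|U :\ x| = l by move: hU; rewrite (cardsD1 x) hx; lia.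
apply: sd_spec; first exact: Fmono (lo_in hL) (up_in hU) (subD1set _ _).
by rewrite (FupS hU) (proj1 (FlowS hL)).
Qed.

Lemma h_spec (L : {set 'I_k}) y : #|L| = l -> y \notin L ->
  exists z, [/\ h L y = Some z, z \notin F L & F (y |: L) = z |: F L].
Proof.
move=> hL hy.
have hU : #|y |: L| = l.+1 by rewrite cardsU1 hy hL.
apply: sd_spec; first exact: Fmono (lo_in hL) (up_in hU) (subsetUr _ _).
by rewrite (FupS hU) (proj1 (FlowS hL)).
Qed.

Definition flag (L U : {set 'I_k}) := [/\ L \subset U, #|L| = l & #|U| = l.+1].

Lemma F_flag (L U : {set 'I_k}) : flag L U -> exists w, w \notin F L /\ F U = w |: F L.
Proof.
case=> hLU hL hU.
have hc : #|F U| = #|F L|.+1 by rewrite (FupS hU) (proj1 (FlowS hL)).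
have [w [_ ? ?]] := sd_spec (Fmono (lo_in hL) (up_in hU) hLU) hc.
by exists w.
Qed.

Lemma phi_in (L U : {set 'I_k}) x : flag L U -> x \in L -> exists z, phi L U x = Some z /\ z \in F L.
Proof.
case=> hLU hL hU hx; rewrite /phi hx.
have hxU : x \in U by apply: (subsetP hLU).
have [z [gz zn FU]] := g_spec hU hxU.
exists z; split => //; apply/negPn/negP => zL.
have hL' : #|U :\ x| = l by move: hU; rewrite (cardsD1 x) hxU; lia.
have zU : z \in F U by rewrite FU setU11.
have cD : #|F U :\ z| = m by move: (FupS hU); rewrite (cardsD1 z) zU; lia.
have e1 : F L = F U :\ z.
  apply: eq_card; last by rewrite cD (proj1 (FlowS hL)).
  apply/subsetP => y hy; rewrite !inE (subsetP (Fmono (lo_in hL) (up_in hU) hLU)) // andbT.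
  by apply/eqP => E; move: zL; rewrite -E hy.
have e2 : F (U :\ x) = F U :\ z.
  apply: eq_card; last by rewrite cD (proj1 (FlowS hL')).
  apply/subsetP => y hy; rewrite FU !inE hy orbT andbT.
  by apply/eqP => E; move: zn; rewrite -E hy.
have := Finj (lo_in hL) (lo_in hL') (etrans e1 (esym e2)).
by move=> E; move: hx; rewrite E setD11.
Qed.

Lemma phi_out (L U : {set 'I_k}) x : flag L U -> x \notin U -> exists z, phi L U x = Some z /\ z \notin F U.
Proof.
case=> hLU hL hU hx.
have hxL : x \notin L by apply/negP => /(subsetP hLU); apply/negP.
rewrite /phi (negbTE hxL).
have [z [hz zn Fx]] := h_spec hL hxL.
exists z; split => //; apply/negP => zU.
have hU' : #|x |: L| = l.+1 by rewrite cardsU1 hxL hL.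
have : F (x |: L) = F U.
  apply: eq_card; last by rewrite (FupS hU) (FupS hU').
  by rewrite Fx subUset sub1set zU (Fmono (lo_in hL) (up_in hU) hLU).
move/(Finj (up_in hU') (up_in hU)) => E; move: hx; by rewrite -E setU11.
Qed.

Lemma flag_elem (L U : {set 'I_k}) : flag L U -> exists b, b \notin L /\ U = b |: L.
Proof.
case=> hLU hL hU.
have : #|U :\: L| == 1 by rewrite cardsD (setIidPr hLU) hU hL; apply/eqP; lia.
case/cards1P => b hb.
have : b \in U :\: L by rewrite hb set11.
rewrite inE => /andP [bL bU]; exists b; split => //.
apply/esym/eq_card; last by rewrite cardsU1 bL hL hU.
by rewrite subUset sub1set bU hLU.
Qed.

Lemma M2 (L U U' : {set 'I_k}) : flag L U -> flag L U' -> forall x, phi L U x = phi L U' x.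
Proof.
move=> fl fl' x; rewrite /phi; case hx: (x \in L) => //.
case: (eqVneq U U') => [->//|neU].
have [z [pz zL]] := phi_in fl hx; have [z' [pz' zL']] := phi_in fl' hx.
rewrite /phi hx in pz pz'; rewrite pz pz'.
case: (eqVneq z z') => [->//|nez].
exfalso.
have [b [bL Ub]] := flag_elem fl; have [b' [bL' Ub']] := flag_elem fl'.
case: fl => hLU hL hU; case: fl' => hLU' _ hU'.
have [w [wn FUw]] := F_flag (And3 hLU hL hU).
have [w' [wn' FUw']] := F_flag (And3 hLU' hL hU').
have nebb : b != b' by apply/eqP => E; move: neU; rewrite Ub Ub' E eqxx.
set W := (b |: (b' |: L)) :\ x.
have cW : #|W| = l.+1.
  have : #|b |: (b' |: L)| = l.+2 by rewrite !cardsU1 in_setU1 (negbTE nebb) (negbTE bL) bL' hL.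
  have hxin : x \in b |: (b' |: L) by rewrite !in_setU1 hx !orbT.
  by rewrite (cardsD1 x) hxin add1n /W => -[].
have hxU : x \in U by rewrite Ub in_setU1 hx orbT.
have hxU' : x \in U' by rewrite Ub' in_setU1 hx orbT.
have [z1 [g1 zn1 FU1]] := g_spec hU hxU.
have [z2 [g2 zn2 FU2]] := g_spec hU' hxU'.
have e1 : z1 = z by move: g1; rewrite pz => -[].
have e2 : z2 = z' by move: g2; rewrite pz' => -[].
subst z1 z2.
have hLx : #|U :\ x| = l by exact: card_del.
have hLx' : #|U' :\ x| = l by exact: card_del.
have s1 : F (U :\ x) \subset F W.
  apply: Fmono; [exact: lo_in | exact: up_in | ].
  apply/subsetP => y; rewrite Ub /W !inE => /andP [-> /orP [->|->]]; by rewrite ?orbT.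
have s2 : F (U' :\ x) \subset F W.
  apply: Fmono; [exact: lo_in | exact: up_in | ].
  apply/subsetP => y; rewrite Ub' /W !inE => /andP [-> /orP [->|->]]; by rewrite ?orbT.
have cFW : #|F W| = m.+1 := FupS cW.
have ww : w != w'.
  apply/eqP => E; have : F U = F U' by rewrite FUw FUw' E.
  by move/(Finj (up_in hU) (up_in hU')) => E2; rewrite E2 eqxx in neU.
have wA : w \in F (U :\ x).
  have : w \in F U by rewrite FUw setU11.
  rewrite FU1 in_setU1 => /orP [/eqP wz|//]; by move: wn; rewrite wz zL.
have wA' : w' \in F (U' :\ x).
  have : w' \in F U' by rewrite FUw' setU11.
  rewrite FU2 in_setU1 => /orP [/eqP wz|//]; by move: wn'; rewrite wz zL'.
have sub : w |: (w' |: F L) \subset F W.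
  rewrite !subUset !sub1set (subsetP s1 _ wA) (subsetP s2 _ wA') /=.
  apply/subsetP => y hy; case: (eqVneq y z) => [->|nyz].
    have : z \in F U' by rewrite FUw' in_setU1 zL orbT.
    rewrite FU2 in_setU1 => /orP [/eqP zz'|ok]; first by rewrite zz' eqxx in nez.
    exact: (subsetP s2).
  have : y \in F U by rewrite FUw in_setU1 hy orbT.
  rewrite FU1 in_setU1 (negbTE nyz) /= => ok; exact: (subsetP s1).
have := subset_leq_card sub.
by rewrite !cardsU1 in_setU1 (negbTE ww) (negbTE wn) wn' (proj1 (FlowS hL)) cFW /= !add1n ltnn.
Qed.
Lemma flag_del (L U : {set 'I_k}) x : flag L U -> x \in U -> x \notin L ->
  L = U :\ x /\ U = x |: L.
Proof.
case=> hLU hL hU hxU hxL; split.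
  apply: eq_card; last by rewrite (card_del hxU hU) hL.
  apply/subsetP => y hy; rewrite !inE (subsetP hLU _ hy) andbT.
  by apply/eqP => E; move: hxL; rewrite -E hy.
apply/esym/eq_card; last by rewrite cardsU1 hxL hL hU.
by rewrite subUset sub1set hxU hLU.
Qed.

Lemma arith_ct a b : a + 1 = b -> b <= a -> False.
Proof. by move=> <-; rewrite addn1 ltnn. Qed.

Lemma M1 (L L' U : {set 'I_k}) : flag L U -> flag L' U -> forall x, phi L U x = phi L' U x.
Proof.
move=> fl fl' x.
case: (eqVneq L L') => [->//|neL].
have fl0 := fl; have fl0' := fl'.
case: fl => hLU hL hU; case: fl' => hLU' hL' _.
rewrite /phi; case hx: (x \in L); case hx': (x \in L') => //.
- have hxU : x \in U by apply: (subsetP hLU).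
  have [E1 E2] := flag_del fl0' hxU (negbT hx').
  by rewrite /g /h -E2 -E1.
- have hxU : x \in U by apply: (subsetP hLU').
  have [E1 E2] := flag_del fl0 hxU (negbT hx).
  by rewrite /g /h -E2 -E1.
case hxU: (x \in U).
  have [E1 _] := flag_del fl0 hxU (negbT hx).
  have [E1' _] := flag_del fl0' hxU (negbT hx').
  by move: neL; rewrite E1 E1' eqxx.
have [z [hz zn Pz]] := h_spec hL (negbT hx).
have [z' [hz' zn' Pz']] := h_spec hL' (negbT hx').
have [z1 [p1 zU]] := phi_out fl0 (negbT hxU).
have [z2 [p2 zU']] := phi_out fl0' (negbT hxU).
rewrite /phi hx hz in p1; rewrite /phi hx' hz' in p2.
case: p1 => e1; case: p2 => e2; subst z1 z2.
rewrite hz hz'; case: (eqVneq z z') => [->//|nez]; exfalso.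
set N := x |: (L :&: L').
have ci := inter_card hLU hLU' hL hL' hU neL.
have hN : #|N| = l by rewrite /N cardsU1 inE hx /= add1n -ci addn1.
have hxL : #|x |: L| = l.+1 by rewrite cardsU1 hx hL.
have hxL' : #|x |: L'| = l.+1 by rewrite cardsU1 hx' hL'.
have FN1 : F N \subset F (x |: L).
  apply: Fmono; [exact: lo_in | exact: up_in |].
  by apply/subsetP => y; rewrite /N !inE => /orP [->|/andP [-> _]]; rewrite ?orbT.
have FN2 : F N \subset F (x |: L').
  apply: Fmono; [exact: lo_in | exact: up_in |].
  by apply/subsetP => y; rewrite /N !inE => /orP [->|/andP [_ ->]]; rewrite ?orbT.
have FLU := Fmono (lo_in hL) (up_in hU) hLU.
have FLU' := Fmono (lo_in hL') (up_in hU) hLU'.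
have sub : F N \subset F L :&: F L'.
  apply/subsetP => y hy; rewrite inE.
  have y1 := subsetP FN1 y hy; have y2 := subsetP FN2 y hy.
  rewrite Pz in_setU1 in y1; rewrite Pz' in_setU1 in y2.
  case/orP: y1 => [/eqP yz|y1]; case/orP: y2 => [/eqP yz'|y2].
  - by move: nez; rewrite -yz -yz' eqxx.
  - by move: zU; rewrite -yz (subsetP FLU' _ y2).
  - by move: zU'; rewrite -yz' (subsetP FLU _ y1).
  - by rewrite y1 y2.
have neF : F L != F L'.
  by apply/eqP => /(Finj (lo_in hL) (lo_in hL')) E; rewrite E eqxx in neL.
have fci := inter_card FLU FLU' (proj1 (FlowS hL)) (proj1 (FlowS hL')) (FupS hU) neF.
apply: (arith_ct fci); rewrite -(proj1 (FlowS hN)); exact: subset_leq_card.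
Qed.

Lemma same_lo (L U L2 U2 : {set 'I_k}) : flag L U -> flag L2 U2 -> #|L :\: L2| = 0 -> L = L2.
Proof.
case=> _ hL _ [_ hL2 _] h0; apply: eq_card; last by rewrite hL hL2.
by rewrite -setD_eq0 -cards_eq0 h0.
Qed.

Lemma conn j : forall (L U L2 U2 : {set 'I_k}), flag L U -> flag L2 U2 ->
  #|L :\: L2| <= j -> forall x, phi L U x = phi L2 U2 x.
Proof.
elim: j => [|j IH] L U L2 U2 fl fl2 hj x.
  move: hj; rewrite leqn0 => /eqP h0.
  have E := same_lo fl fl2 h0; subst L2; exact: M2.
case: (posnP #|L :\: L2|) => [h0|hpos].
  have E := same_lo fl fl2 h0; subst L2; exact: M2.
have fl0 := fl; have fl20 := fl2.
case: fl => hLU hL hU; case: fl2 => hLU2 hL2 hU2.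
case/card_gt0P: (hpos) => a ha; move: (ha); rewrite inE => /andP [aL2 aL].
have e : #|L2 :\: L| = #|L :\: L2| by rewrite !cardsD setIC hL hL2.
have : 0 < #|L2 :\: L| by rewrite e.
case/card_gt0P => b hb; move: hb; rewrite inE => /andP [bL bL2].
set U' := b |: L; set L' := U' :\ a.
have cU' : #|U'| = l.+1 by rewrite /U' cardsU1 bL hL.
have flU' : flag L U' by split => //; exact: subsetUr.
have aU' : a \in U' by rewrite /U' in_setU1 aL orbT.
have flL' : flag L' U' by split => //; [exact: subD1set | exact: card_del].
have hj' : #|L' :\: L2| <= j.
  have s : L' :\: L2 \subset (L :\: L2) :\ a.
    apply/subsetP => y; rewrite /L' /U' !inE => /andP [yL2 /andP [ya yb]].
    rewrite yL2 ya /=; case/orP: yb => [/eqP yb|//].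
    by move: yL2; rewrite yb bL2.
  have e2 := cardsD1 a (L :\: L2); rewrite ha add1n in e2.
  rewrite e2 ltnS in hj; exact: leq_trans (subset_leq_card s) hj.
by rewrite (M2 fl0 flU') (M1 flU' flL') (IH _ _ _ _ flL' fl20 hj').
Qed.

Lemma back (p q : L2 k) : L2_le (f p) (f q) -> L2_le p q.
Proof.
rewrite /L2_le -!FE; case: p => A hA; case: q => B hB /= hsub.
have hA0 := hA; have hB0 := hB.
move: hA hB; rewrite /in_L2 /L2_high /L2_low /=.
case/orP => /eqP cA; case/orP => /eqP cB.
- have e : F A = F B by apply: eq_card => //; rewrite (proj1 (FlowS cA)) (proj1 (FlowS cB)).
  by rewrite (Finj hA0 hB0 e).
- apply/subsetP => x hx; apply/negPn/negP => hxB.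
  have [y hy] := lo_out cA.
  have flA : flag A (y |: A) by split => //; [exact: subsetUr | rewrite cardsU1 hy cA].
  have : 0 < #|B| by rewrite cB.
  case/card_gt0P => v hv.
  have flB : flag (B :\ v) B by split => //; [exact: subD1set | exact: card_del].
  have [z [pz zA]] := phi_in flA hx.
  have [z' [pz' zB]] := phi_out flB hxB.
  have := conn flA flB (leqnn _) x; rewrite pz pz' => -[E].
  by move: zB; rewrite -E (subsetP hsub _ zA).
- exfalso; have := subset_leq_card hsub.
  by rewrite (FupS cA) (proj1 (FlowS cB)) ltnn.
- have e : F A = F B by apply: eq_card => //; rewrite (FupS cA) (FupS cB).
  by rewrite (Finj hA0 hB0 e).
Qed.

End Main.

Theorem mainTheorem9 (k n : nat) (f : L2 k -> L2 n) :
  weak_embedding f -> strong_embedding f.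
Proof.
case=> finj fmono; split => // p q; split; first exact: fmono.
move: f finj fmono p q; case: k => [|k'] f finj fmono p q H.
  by apply/subsetP => x; case: x.
exact: back finj fmono p q H.
Qed.
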